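(* Let $G$ be a finite group, $p$ a prime, and $B_0$ the principal $p$-block of $G$. Let $\chi, \psi \in \mathrm{Irr}(B_0)$ with $p \nmid \chi(1)$ and suppose that the product $\chi\psi$ is irreducible. Then $\chi\psi \in \mathrm{Irr}(B_0)$. *)

(* Defs.v *)
From mathcomp Require Import all_boot all_order all_algebra all_fingroup all_solvable all_field all_character.
Set Implicit Arguments. Unset Strict Implicit. Unset Printing Implicit Defensive.
Import GRing.Theory Num.Theory.
Local Open Scope ring_scope.

(* A maximal ideal M of the ring Aint of algebraic integers (inside algC)
   containing the prime p.  Following Navarro, "Characters and blocks of
   finite groups", blocks are defined with respect to such an M. *)
Definition max_ideal_over (p : nat) (M : pred algC) : Prop :=
  {subset M <= Aint} /\
  0 \in M /\
  {in M &, forall a b, a + b \in M} /\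
  {in Aint & M, forall r a, r * a \in M} /\
  1 \notin M /\
  {in Aint, forall a, a \notin M ->
     exists r, exists m, [/\ r \in Aint, m \in M & 1 = r * a + m]} /\
  (p%:R : algC) \in M.

Definition central_char (gT : finGroupType) (G : {group gT})
  (chi : 'CF(G)) (K : {set gT}) : algC :=
  #|K|%:R * chi (repr K) / chi 1%g.

(* chi lies in the principal block (w.r.t. M) iff its central character
   agrees mod M with that of the trivial character, omega_1(K^) = |K|,
   on every conjugacy class K of G. *)
Definition in_principal_block (M : pred algC) (gT : finGroupType)
  (G : {group gT}) (chi : 'CF(G)) : Prop :=
  chi \in irr G /\
  forall K, K \in classes G -> central_char chi K - #|K|%:R \in M.

(* Main.v *)
Require Import Defs.
From mathcomp Require Import all_boot all_order all_algebra all_fingroup all_solvable all_field all_character.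
From mathcomp Require Import ring.
Import GRing.Theory Num.Theory.
Local Open Scope ring_scope.

Theorem lemma2p3 (gT : finGroupType) (G : {group gT}) (p : nat)
  (M : pred algC) (pr_p : prime p) (HM : max_ideal_over p M)
  (chi psi : 'CF(G))
  (Hchi : in_principal_block M chi) (Hpsi : in_principal_block M psi)
  (Hdeg : ~~ (p %| Num.truncn (chi 1%g))%N)
  (Hirr : chi * psi \in irr G) :
  in_principal_block M (chi * psi).
Proof.
case: HM => [MA [M0 [MD [MM [M1 [Mmax Mp]]]]]].
case: Hchi => [/irrP[i Di] Hc]; case: Hpsi => [/irrP[j Dj] Hp].
split=> // K KG.
have /irrP[l Dl] := Hirr.
have [x Gx DK] := imsetP KG.
have xK : repr K \in K by rewrite DK; apply: (mem_repr x); apply: class_refl.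
have DK' : K = (repr K ^: G)%g by rewrite DK; apply/esym/class_eqP; rewrite -DK.
have GrK : repr K \in G by move: xK; rewrite DK => /imsetP[y Gy ->]; rewrite groupJ.
set a := chi 1%g; set b := psi 1%g; set c := chi (repr K); set d := psi (repr K).
set k : algC := #|K|%:R.
have a0 : a != 0 by rewrite /a Di irr1_neq0.
have b0 : b != 0 by rewrite /b Dj irr1_neq0.
have aA : a \in Aint by rewrite /a Di Aint_irr.
have cA : c \in Aint by rewrite /c Di Aint_irr.
have kA : k \in Aint by rewrite /k Aint_Cnat // rpred_nat.
have yA : central_char (chi * psi) K - k \in Aint.
  rewrite rpredB // /central_char Dl {1}DK'.
  exact: Aint_class_div_irr1.
have aM : a \notin M.
  apply/negP => aM; move/negP: M1; apply.
  have cop : coprime p (Num.truncn a) by rewrite prime_coprime.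
  have [u _ ] := Bezoutl (Num.truncn a) (prime_gt0 pr_p).
  rewrite (eqP cop) => /dvdnP[q Dq].
  have Da : a = (Num.truncn a)%:R by rewrite truncnK // /a Di Cnat_irr1.
  have -> : 1 = q%:R * p%:R + (- u%:R) * a :> algC.
    by rewrite {1}Da -natrM -Dq natrD natrM mulNr addrK.
  apply: MD; apply: MM => //.
    by apply: Aint_Cnat; apply: rpred_nat.
  by rewrite rpredN; apply: Aint_Cnat; apply: rpred_nat.
set y := central_char (chi * psi) K - k.
have ayM : a * y \in M.
  have -> : a * y = c * (central_char psi K - k) + a * (central_char chi K - k).
    rewrite /y /central_char !cfunE -/a -/b -/c -/d -/k.
    by field; apply/andP; split.
  apply: MD; apply: MM => //; [apply: (Hp K KG) | apply: (Hc K KG)].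
have [r [m [rA mM E]]] := Mmax a aA aM.
have -> : y = r * (a * y) + y * m by rewrite mulrA [y * m]mulrC -mulrDl -E mul1r.
by apply: MD; apply: MM.
Qed.
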